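(* The map $T\colon\mathcal{I}_\alpha\to\mathbb{T}$ defined by $T(\beta)=([0,\mathscr{D}_\beta(\infty)],d,M(\beta))$, where $d$ is the Euclidean metric restricted to $[0,\mathscr{D}_\beta(\infty)]$ and $M(\beta)=\sum_{U\in\beta}\mathrm{Leb}(U)\,\delta_{\mathscr{D}_\beta(U)}$, is continuous from $(\mathcal{I}_\alpha,d_\alpha)$ to $\mathbb{T}$.
   Context: Fix $\alpha\in(0,1)$. $\mathbb{T}$ denotes the space of isometry classes of compact rooted weighted $\mathbb{R}$-trees (rooted compact real trees equipped with a finite Borel measure), equipped with the Gromov--Hausdorff--Prokhorov metric; the segment $[0,\mathscr{D}_\beta(\infty)]$ is rooted at $0$. An interval partition is a set $\beta$ of disjoint open subintervals (blocks) of some interval $[0,L]$ that cover $[0,L]$ up to a Lebesgue-null set; write $\|\beta\|:=L$ and $\mathrm{Leb}(U)$ for the length of a block $U$. A partition $\beta$ has the $\alpha$-diversity property if for every $t\in[0,\|\beta\|]$ the limit $\mathscr{D}_\beta(t):=\Gamma(1-\alpha)\lim_{h\downarrow0}h^\alpha\#\{(a,b)\in\beta\colon b-a>h,\ b\le t\}$ exists; $\mathcal{I}_\alpha$ is the set of such partitions. For $U\in\beta$, $\mathscr{D}_\beta(U):=\mathscr{D}_\beta(t)$ for any $t\in U$, and $\mathscr{D}_\beta(\infty):=\mathscr{D}_\beta(\|\beta\|)$. A correspondence between $\beta,\gamma\in\mathcal{I}_\alpha$ is a finite sequence $(U_j,V_j)_{j\in[n]}$, $n\ge0$, of pairs in $\beta\times\gamma$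 with $(U_j)_j$ and $(V_j)_j$ each strictly increasing in left-to-right order. Its $\alpha$-distortion is the maximum of (i) $\sum_{j}|\mathrm{Leb}(U_j)-\mathrm{Leb}(V_j)|+\|\beta\|-\sum_j\mathrm{Leb}(U_j)$, (ii) $\sum_{j}|\mathrm{Leb}(U_j)-\mathrm{Leb}(V_j)|+\|\gamma\|-\sum_j\mathrm{Leb}(V_j)$, (iii) $\sup_{j}|\mathscr{D}_\beta(U_j)-\mathscr{D}_\gamma(V_j)|$, (iv) $|\mathscr{D}_\beta(\infty)-\mathscr{D}_\gamma(\infty)|$. $d_\alpha(\beta,\gamma)$ is the infimum of the $\alpha$-distortion over all correspondences. *)

(* Defs.v *)
From HB Require Import structures.
From mathcomp Require Import all_boot all_order all_algebra.
From mathcomp Require Import finmap.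
From mathcomp Require Import all_classical all_reals all_analysis.
Set Implicit Arguments.
Unset Strict Implicit.
Unset Printing Implicit Defensive.
Import Order.TTheory GRing.Theory Num.Theory.
Import numFieldNormedType.Exports.
Local Open Scope classical_set_scope.
Local Open Scope ring_scope.

Section Defs.
Variable R : realType.

Definition Gamma (s : R) : R :=
  fine (\int[@lebesgue_measure R]_(x in `]0%R, +oo[)
          ((x `^ (s - 1)) * expR (- x))%:E).

(* A block U of an interval partition is the open interval ]U.1, U.2[,
   encoded by its endpoints (U.1 < U.2). *)
Definition block_set (U : R * R) : set R := `]U.1, U.2[%classic.
Definition Leb (U : R * R) : R := U.2 - U.1.

Definition is_interval_partition (L : R) (beta : set (R * R)) : Prop :=
  [/\ 0 <= L,
      (forall U, beta U -> 0 <= U.1 /\ U.1 < U.2 /\ U.2 <= L),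
      (forall U V, beta U -> beta V -> U <> V ->
         block_set U `&` block_set V = set0)
    & (@lebesgue_measure R).-negligible
        (`[0, L]%classic `\` \bigcup_(U in beta) block_set U)].

Record IP := MkIP {
  ip_len : R;
  ip_blocks : set (R * R);
  ip_ok : is_interval_partition ip_len ip_blocks }.

(* #{(a,b) in beta : b - a > h, b <= t} (finite for h > 0) *)
Definition count_blocks (beta : IP) (h t : R) : nat :=
  #|` fset_set [set U | ip_blocks beta U /\ h < Leb U /\ U.2 <= t] |%fset.

Definition div_approx (alpha : R) (beta : IP) (t : R) : R -> R :=
  fun h => Gamma (1 - alpha) * (h `^ alpha * (count_blocks beta h t)%:R).

Definition has_diversity (alpha : R) (beta : IP) : Prop :=
  forall t, 0 <= t <= ip_len beta -> cvg (div_approx alpha beta t @ 0^'+).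

Definition Div (alpha : R) (beta : IP) (t : R) : R :=
  lim (div_approx alpha beta t @ 0^'+).

(* D_beta(U) := D_beta(t) for t in U (here the midpoint) *)
Definition DivU (alpha : R) (beta : IP) (U : R * R) : R :=
  Div alpha beta ((U.1 + U.2) / 2).

Definition Div_inf (alpha : R) (beta : IP) : R := Div alpha beta (ip_len beta).

Definition is_correspondence (beta gamma : IP) (s : seq ((R * R) * (R * R)))
  : Prop :=
  (forall p, p \in s -> ip_blocks beta p.1 /\ ip_blocks gamma p.2) /\
  sorted (fun p q => (p.1.1 < q.1.1) && (p.2.1 < q.2.1)) s.

Definition distortion (alpha : R) (beta gamma : IP)
    (s : seq ((R * R) * (R * R))) : R :=
  let dl := \sum_(p <- s) `|Leb p.1 - Leb p.2| in
  Num.max (Num.max (dl + ip_len beta - \sum_(p <- s) Leb p.1)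
                   (dl + ip_len gamma - \sum_(p <- s) Leb p.2))
          (Num.max (\big[Num.max/0]_(p <- s)
                       `|DivU alpha beta p.1 - DivU alpha gamma p.2|)
                   `|Div_inf alpha beta - Div_inf alpha gamma|).

Definition d_alpha (alpha : R) (beta gamma : IP) : R :=
  inf [set distortion alpha beta gamma s | s in
        [set s | is_correspondence beta gamma s]].

Record rmms := MkRMMS {
  car : Type;
  pts : set car;
  dist : car -> car -> R;
  root : car;
  meas : set car -> \bar R }.
Arguments car : clear implicits.
Arguments pts : clear implicits.
Arguments dist : clear implicits.
Arguments root : clear implicits.
Arguments meas : clear implicits.

Definition is_metric (Z : Type) (d : Z -> Z -> R) : Prop :=
  (forall x y, d x y = 0 <-> x = y) /\ (forall x y, d x y = d y x) /\
  (forall x y z, d x z <= d x y + d y z).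

Definition nbhd_e (Z : Type) (d : Z -> Z -> R) (A : set Z) (e : R) : set Z :=
  [set z | exists2 a, A a & d z a < e].

Definition closed_d (Z : Type) (d : Z -> Z -> R) (A : set Z) : Prop :=
  forall z, (forall e, 0 < e -> exists2 a, A a & d z a < e) -> A z.

Definition hausdorff (Z : Type) (d : Z -> Z -> R) (A B : set Z) : R :=
  inf [set e | 0 < e /\ A `<=` nbhd_e d B e /\ B `<=` nbhd_e d A e].

Definition prokhorov (Z : Type) (d : Z -> Z -> R) (mu nu : set Z -> \bar R)
  : R :=
  inf [set e | 0 < e /\ forall A, closed_d d A ->
         (mu A <= nu (nbhd_e d A e) + e%:E)%E /\
         (nu A <= mu (nbhd_e d A e) + e%:E)%E].

Definition isometric_on (X Z : Type) (S : set X) (dX : X -> X -> R)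
  (dZ : Z -> Z -> R) (f : X -> Z) : Prop :=
  forall x y, S x -> S y -> dZ (f x) (f y) = dX x y.

Definition ghp_dist (X Y : rmms) : R :=
  inf [set r | exists (Z : Type) (dZ : Z -> Z -> R)
                  (f : car X -> Z) (g : car Y -> Z),
     [/\ is_metric dZ, isometric_on (pts X) (dist X) dZ f,
         isometric_on (pts Y) (dist Y) dZ g &
         r = Num.max (hausdorff dZ (f @` pts X) (g @` pts Y))
               (Num.max (dZ (f (root X)) (g (root Y)))
                  (prokhorov dZ (fun A => meas X (f @^-1` A))
                                (fun A => meas Y (g @^-1` A))))]].

Definition M_meas (alpha : R) (beta : IP) (A : set R) : \bar R :=
  (\esum_(U in [set U | ip_blocks beta U /\ A (DivU alpha beta U)])
     (Leb U)%:E)%E.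

Definition T_tree (alpha : R) (beta : IP) : rmms :=
  @MkRMMS R `[0, Div_inf alpha beta]%classic (fun x y => `|x - y|) 0
          (M_meas alpha beta).

End Defs.

(* Main.v *)
Require Import Defs.
From HB Require Import structures.
From mathcomp Require Import all_boot all_order all_algebra.
From mathcomp Require Import all_classical all_reals all_analysis.
Import Order.TTheory GRing.Theory Num.Theory.
Local Open Scope ring_scope.
Import numFieldNormedType.Exports.
From mathcomp Require Import lra.
Local Open Scope classical_set_scope.
Lemma sum_le_len (R : realType) (b : IP R) (l : seq (R*R)) : uniq l ->
  (forall U, U \in l -> ip_blocks b U) -> \sum_(U <- l) Leb U <= ip_len b.
Proof.
case: b => L B [L0 Hb Hd _] /= ul lB.
have mB : forall U : R * R, measurable (block_set U) by move=> U; rewrite /block_set; exact: (@measurable_itv R `]U.1, U.2[%R).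
have tr : trivIset [set` l] (@block_set R).
  move=> U V /= Ul Vl [x [xU xV]]; have [//|/eqP UV] := eqVneq U V.
  have := Hd U V (lB _ Ul) (lB _ Vl) UV.
  by move/seteqP => [/(_ x (conj xU xV))].
have H0 := @measure_fin_bigcup _ _ _ (@lebesgue_measure R) _ _ (@block_set R) (finite_seq l).
have := H0 tr.
rewrite -fsbig_seq //.
have -> : \sum_(i <- l) lebesgue_measure (block_set i) = \sum_(i <- l) (Leb i)%:E.
  apply: eq_big_seq => U /lB /Hb [h1 [h2 h3]].
  rewrite /block_set lebesgue_measure_itv /= lte_fin h2 /Leb.
  by rewrite EFinB.
rewrite sumEFin => H1; rewrite -lee_fin -H1.
have <- : lebesgue_measure (`[0, L]%classic : set R) = L%:E.
  rewrite lebesgue_measure_itv /= lte_fin.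
  case: ltP => H; first by rewrite oppr0 addr0.
  by have -> : L = 0 by apply/eqP; rewrite eq_le H L0.
apply: (@le_measure _ _ _ (@lebesgue_measure R)); rewrite ?inE.
- apply: fin_bigcup_measurable; [exact: finite_seq | move=> i _; exact: mB].
- exact: (@measurable_itv R `[0, L]%R).
- move=> x [U /= Ul] /=; rewrite /block_set /= in_itv /= => /andP[a b].
  have [h1 [h2 h3]] := Hb _ (lB _ Ul).
  rewrite in_itv /=; apply/andP; split.
  + by rewrite (le_trans h1) // ltW.
  + by rewrite (le_trans _ h3) // ltW.
move=> i _; exact: mB.
Qed.

Lemma sum_sub_le (T : eqType) (R : realDomainType) (F : T -> R) (l l' : seq T) :
  uniq l -> uniq l' -> {subset l <= l'} -> (forall x, x \in l' -> 0 <= F x) ->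
  \sum_(x <- l) F x <= \sum_(x <- l') F x.
Proof.
move=> ul ul' sub F0.
have P : perm_eq l [seq x <- l' | x \in l].
  apply: uniq_perm => //; first exact: filter_uniq.
  by move=> x; rewrite mem_filter; case xl: (x \in l) => //=; rewrite sub.
rewrite (perm_big _ P) big_filter [X in _ <= X](bigID (fun x => x \in l)) /= lerDl.
rewrite big_seq_cond; apply: sumr_ge0 => i /andP[il' _]; exact: F0.
Qed.

Lemma corr_uniq (R : realType) (b g : IP R) (s : seq ((R*R)*(R*R))) :
  is_correspondence b g s -> uniq (map fst s) /\ uniq (map snd s).
Proof.
move=> [_ so]; split.
- apply: (@sorted_uniq _ (fun U V : R * R => U.1 < V.1)).
  + by move=> x y z; apply: lt_trans.
  + by move=> x; rewrite ltxx.
  rewrite sorted_map; apply: sub_sorted so => p q /andP[].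
  by [].
- apply: (@sorted_uniq _ (fun U V : R * R => U.1 < V.1)).
  + by move=> x y z; apply: lt_trans.
  + by move=> x; rewrite ltxx.
  rewrite sorted_map; apply: sub_sorted so => p q /andP[].
  by [].
Qed.

Lemma Leb_ge0 (R : realType) (c : IP R) U : ip_blocks c U -> 0 <= Leb U.
Proof. by case: c => L B [_ Hb _ _] /= /Hb [h1 [h2 _]]; rewrite /Leb subr_ge0 ltW. Qed.

Section Prok.
Import finmap.
Lemma prok_dir (R : realType) alpha (b g : IP R) (s : seq ((R*R)*(R*R))) (e : R) (A : set R) :
  is_correspondence b g s ->
  \sum_(p <- s) `|Leb p.1 - Leb p.2| + ip_len b - \sum_(p <- s) Leb p.1 <= e ->
  (forall p, p \in s -> `|DivU alpha b p.1 - DivU alpha g p.2| < e) ->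
  (M_meas alpha b A <= M_meas alpha g (nbhd_e (fun x y : R => `|x - y|%R) A e) + e%:E)%E.
Proof.
move=> hc hdist hdiv.
have [u1 u2] := @corr_uniq R b g s hc.
have [hin _] := hc.
set P := \sum_(p <- s | `[< A (DivU alpha b p.1) >]) Leb p.2.
have HP : (P%:E <= M_meas alpha g (nbhd_e (fun x y : R => `|x - y|%R) A e))%E.
  apply: esum_ge; exists [set` [seq p.2 | p <- s & `[< A (DivU alpha b p.1) >]]].
  - split; first exact: finite_seq.
    move=> V /= /mapP [p]; rewrite mem_filter => /andP[/asboolP Ap ps] ->.
    split; first exact: (hin p ps).2.
    by exists (DivU alpha b p.1) => //; rewrite distrC hdiv.
  - rewrite -fsbig_seq; last exact: (subseq_uniq (map_subseq _ (filter_subseq _ _)) u2).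
    by rewrite sumEFin big_map big_filter.
apply: (@le_trans _ _ (P%:E + e%:E)%E); last exact: leeD2r.
rewrite -EFinD; apply: ge_ereal_sup => _ [F [finF FS] <-].
rewrite fsbig_finite //= sumEFin lee_fin.
set f := fset_set F.
have fS : forall U : R * R, U \in f -> ip_blocks b U /\ A (DivU alpha b U).
  by move=> U; rewrite in_fset_set // => /set_mem /FS.
have uf : uniq f := fset_uniq f.
rewrite (bigID (fun U => U \in map fst s)) /=.
have Ha : \sum_(U <- f | U \notin map fst s) Leb U + \sum_(p <- s) Leb p.1 <= ip_len b.
  rewrite -big_filter.
  have := @sum_le_len R b ([seq U <- f | U \notin map fst s] ++ map fst s).
  rewrite big_cat big_map; apply.
  - rewrite cat_uniq filter_uniq // u1 /= andbT.
    by apply/hasPn => U Us; rewrite mem_filter Us.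
  - move=> U; rewrite mem_cat mem_filter => /orP[/andP[_ /fS[]]//| /mapP[p ps ->]].
    exact: (hin p ps).1.
have Hb : \sum_(U <- f | U \in map fst s) Leb U <=
          \sum_(p <- s | `[< A (DivU alpha b p.1) >]) Leb p.1.
  rewrite -(big_map fst (fun U => `[< A (DivU alpha b U) >]) (fun U => Leb U)).
  rewrite -[X in X <= _]big_filter -[X in _ <= X]big_filter.
  apply: sum_sub_le.
  - exact: filter_uniq.
  - exact: filter_uniq.
  - move=> U; rewrite !mem_filter => /andP[Us Uf]; rewrite Us andbT.
    by apply/asboolP; exact: (fS U Uf).2.
  - move=> U; rewrite mem_filter => /andP[_ /mapP[p ps ->]].
    exact: Leb_ge0 (hin p ps).1.
have Hc : \sum_(p <- s | `[< A (DivU alpha b p.1) >]) Leb p.1 <=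
          P + \sum_(p <- s) `|Leb p.1 - Leb p.2|.
  apply: (@le_trans _ _ (\sum_(p <- s | `[< A (DivU alpha b p.1) >]) (Leb p.2 + `|Leb p.1 - Leb p.2|))).
    by apply: ler_sum => p _; rewrite -lerBlDl ler_norm.
  rewrite big_split /= lerD2l.
  rewrite [X in _ <= X](bigID (fun p => `[< A (DivU alpha b p.1) >])) /= lerDl.
  by apply: sumr_ge0.
lra.
Qed.
End Prok.

Lemma Gamma_ge0 (R : realType) (x : R) : 0 <= Gamma x.
Proof.
rewrite /Gamma; apply: fine_ge0; apply: integral_ge0 => y _.
by rewrite lee_fin mulr_ge0 // ?powR_ge0 ?expR_ge0.
Qed.

Lemma Div_inf_ge0 (R : realType) alpha (c : IP R) :
  has_diversity alpha c -> 0 <= Div_inf alpha c.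
Proof.
move=> hc; rewrite /Div_inf /Div; apply: limr_ge.
- apply: hc; have [L0 _ _ _] := ip_ok c.
  by rewrite L0 lexx.
- apply: nearW => h; rewrite /div_approx mulr_ge0 ?Gamma_ge0 //.
  by rewrite mulr_ge0 ?powR_ge0.
Qed.

Lemma swap_corr (R : realType) (b g : IP R) s :
  is_correspondence b g s ->
  is_correspondence g b (map (fun p : (R*R)*(R*R) => (p.2, p.1)) s).
Proof.
move=> [hin so]; split.
- by move=> p /mapP [q qs ->] /=; have [? ?] := hin q qs.
- rewrite sorted_map; apply: sub_sorted so => p q /=.
  by rewrite andbC.
Qed.

Lemma haus_cover (R : realType) (D1 D2 e : R) : 0 <= D2 -> `|D1 - D2| < e ->
  (fun x : R => x) @` `[0, D1]%classic `<=`
  nbhd_e (fun x y : R => `|x - y|) ((fun x : R => x) @` `[0, D2]%classic) e.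
Proof.
move=> D20 he x [y /= hy <-]; move: hy; rewrite in_itv /= => /andP[y0 yD].
exists (Num.min y D2).
  exists (Num.min y D2) => //; rewrite /= in_itv /= le_min y0 D20 /=.
  by rewrite ge_min lexx orbT.
have n0 := normr_ge0 (D1 - D2); have n1 := ler_norm (D1 - D2).
case: (leP y D2) => h.
  by rewrite subrr normr0; lra.
rewrite ger0_norm; first lra.
by rewrite subr_ge0 ltW.
Qed.

Lemma metric_ge0 (R : realType) (Z : Type) (d : Z -> Z -> R) x y :
  is_metric d -> 0 <= d x y.
Proof.
move=> [h0 [hs ht]]; have := ht x y x; rewrite (hs y x) ((h0 x x).2 erefl).
move=> h; lra.
Qed.

Theorem corollary2p5 (R : realType) (alpha : R) (halpha : 0 < alpha < 1)
  (beta : IP R) (hbeta : has_diversity alpha beta) (eps : R) (heps : 0 < eps) :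
  exists2 delta : R, 0 < delta &
    forall gamma : IP R, has_diversity alpha gamma ->
      d_alpha alpha beta gamma < delta ->
      ghp_dist (T_tree alpha beta) (T_tree alpha gamma) < eps.
Proof.
exists (eps / 2); first by rewrite divr_gt0.
move=> gamma hg hd.
set e := eps / 2.
have e0 : 0 < e by rewrite divr_gt0.
have [y [s hs <-] hy] : exists2 y,
    [set distortion alpha beta gamma s | s in
       [set s | is_correspondence beta gamma s]] y & y < e.
  apply: inf_lt => //; exists (distortion alpha beta gamma [::]).
  by exists [::] => //; split => // p; rewrite in_nil.
move: hy; rewrite /distortion /= !gt_max => /andP[/andP[h1 h2] /andP[h3 h4]].
have hdiv : forall p, p \in s ->
    `|DivU alpha beta p.1 - DivU alpha gamma p.2| < e.
  move=> p ps; apply: le_lt_trans h3.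
  exact: (@le_bigmax_seq _ _ _ s 0 p xpredT
     (fun q => `|DivU alpha beta q.1 - DivU alpha gamma q.2|) ps isT).
have Db := @Div_inf_ge0 R alpha beta hbeta; have Dg := @Div_inf_ge0 R alpha gamma hg.
apply: (@le_lt_trans _ _ e); last by rewrite /e; lra.
set dZ := (fun x y : R => `|x - y|).
set r0 := (Num.max (hausdorff dZ ((fun x : R => x) @` `[0, Div_inf alpha beta]%classic)
                           ((fun x : R => x) @` `[0, Div_inf alpha gamma]%classic))
       (Num.max (dZ 0 0)
          (prokhorov dZ (fun A => M_meas alpha beta ((fun x : R => x) @^-1` A))
                        (fun A => M_meas alpha gamma ((fun x : R => x) @^-1` A))))).
have HS : ghp_dist (T_tree alpha beta) (T_tree alpha gamma) <= r0.
  rewrite /ghp_dist; apply: ge_inf.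
    exists 0 => r [Z [dZ' [f [g [hm _ _ ->]]]]].
    rewrite le_max; apply/orP; right; rewrite le_max; apply/orP; left.
    exact: metric_ge0.
  exists R, dZ, (fun x => x), (fun x => x); split => //.

  split; [|split].
  - move=> x z; rewrite /dZ; split => [/eqP|->]; last by rewrite subrr normr0.
    by rewrite normr_eq0 subr_eq0 => /eqP.
  - by move=> x z; rewrite /dZ distrC.
  - by move=> x z w; rewrite /dZ ler_distD.
apply: le_trans HS _.
rewrite !ge_max; apply/andP; split; [|apply/andP; split].
- rewrite /hausdorff; apply: le_trans (ge_inf _ _) (lexx e).
    by exists 0 => r [rpos _]; apply: ltW.
  by split => //; split; apply: haus_cover => //; rewrite distrC.
- by rewrite /dZ subrr normr0 ltW.
- rewrite /prokhorov; apply: le_trans (ge_inf _ _) (lexx e).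
    by exists 0 => r [rpos _]; apply: ltW.
  split => // A _; split.
    by apply: (@prok_dir R alpha beta gamma s) => //; apply: ltW.
  apply: (@prok_dir R alpha gamma beta (map (fun p : (R*R)*(R*R) => (p.2, p.1)) s)).
  + exact: swap_corr.
  + rewrite !big_map /=; rewrite (eq_bigr _ (fun p _ => distrC _ _)); exact: ltW.
  + by move=> p /mapP [q qs ->] /=; rewrite distrC hdiv.
Qed.
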